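(* Let $(x_n,y_n)_{n\ge0}$ be the sequence of lattice points visited by the Hilbert curve, as defined in the context. Let $\mathtt{HS}$ be the deterministic finite automaton over the alphabet $\{0,1,2,3\}\times\{0,1\}\times\{0,1\}$ with states $\{0,\dots,9\}$ plus a non-accepting dead state, initial state $0$, accepting states $\{0,2,3,5,6,7\}$, and the following transitions (written $q\xrightarrow{[i,j,k]}q'$; all unlisted transitions go to the dead state, which loops to itself): from 0: $[0,0,0]\to0$, $[1,0,1]\to3$, $[1,1,0]\to1$, $[2,1,1]\to5$, $[3,0,1]\to4$, $[3,1,0]\to2$; from 1: $[0,0,0]\to3$, $[1,1,0]\to6$, $[2,1,1]\to6$, $[3,0,1]\to7$; from 2: $[0,1,1]\to4$, $[1,0,1]\to8$, $[2,0,0]\to8$, $[3,1,0]\to9$; from 3: $[0,0,0]\to1$, $[1,0,1]\to9$, $[2,1,1]\to9$, $[3,1,0]\to8$; from 4: $[0,1,1]\to2$, $[1,1,0]\to7$, $[2,0,0]\to7$, $[3,0,1]\to6$; from 5: $[0,0,0]\to5$, $[1,0,1]\to9$, $[1,1,0]\to6$, $[2,1,1]\to0$, $[3,0,1]\to7$, $[3,1,0]\to8$; from 6: $[0,0,0]\to9$, $[1,1,0]\to1$, $[2,1,1]\to1$, $[3,0,1]\to4$; from 7: $[0,1,1]\to8$, $[1,1,0]\to4$, $[2,0,0]\to4$, $[3,0,1]\to1$; from 8: $[0,1,1]\to7$, $[1,0,1]\to2$, $[2,0,0]\to2$, $[3,1,0]\to3$; from 9: $[0,0,0]\to6$, $[1,0,1]\to3$,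 $[2,1,1]\to3$, $[3,1,0]\to2$. For natural numbers $n,x,y$ and $t$ with $n<4^t$, $x<2^t$, $y<2^t$, let $a_1\cdots a_t$ be the base-$4$ representation of $n$, and $b_1\cdots b_t$, $c_1\cdots c_t$ the base-$2$ representations of $x,y$, each padded with leading zeros to length $t$. Then $\mathtt{HS}$ accepts $[a_1,b_1,c_1]\cdots[a_t,b_t,c_t]$ if and only if $(x,y)=(x_n,y_n)$. That is, the triple $(n,x_n,y_n)$ is $(4,2,2)$-synchronized, and $\mathtt{HS}$ recognizes it.
   Context: Directions are letters of $\{\mathtt{U},\mathtt{D},\mathtt{R},\mathtt{L}\}$. Let $t_D$ be the morphism $\mathtt{U}\mapsto\mathtt{R},\mathtt{D}\mapsto\mathtt{L},\mathtt{R}\mapsto\mathtt{U},\mathtt{L}\mapsto\mathtt{D}$ and $t_H$ the morphism $\mathtt{U}\mapsto\mathtt{D},\mathtt{D}\mapsto\mathtt{U},\mathtt{R}\mapsto\mathtt{L},\mathtt{L}\mapsto\mathtt{R}$. Define $A_0=\epsilon$ and for $n\ge0$: $A_{2n+1}=A_{2n}\,\mathtt{U}\,t_D(A_{2n})\,\mathtt{R}\,t_D(A_{2n})\,\mathtt{D}\,t_H(A_{2n})$, $A_{2n+2}=A_{2n+1}\,\mathtt{R}\,t_D(A_{2n+1})\,\mathtt{U}\,t_D(A_{2n+1})\,\mathtt{L}\,t_H(A_{2n+1})$. Each $A_n$ is a prefix of $A_{n+1}$; let $\mathbf{HC}=h_0h_1\cdots$ be the infinite word with all $A_n$ as prefixes.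 Define $(x_0,y_0)=(0,0)$ and $(x_{n+1},y_{n+1})=(x_n,y_n)+d(h_n)$ where $d(\mathtt{R})=(1,0)$, $d(\mathtt{L})=(-1,0)$, $d(\mathtt{U})=(0,1)$, $d(\mathtt{D})=(0,-1)$. *)

(* Defs.v *)
From Stdlib Require Import Arith ZArith List Lia.
Import ListNotations.

Inductive dir := U | D | R | L.

Definition tD (a : dir) : dir :=
  match a with U => R | D => L | R => U | L => D end.
Definition tH (a : dir) : dir :=
  match a with U => D | D => U | R => L | L => R end.

Definition step_odd (w : list dir) : list dir :=
  w ++ [U] ++ map tD w ++ [R] ++ map tD w ++ [D] ++ map tH w.
Definition step_even (w : list dir) : list dir :=
  w ++ [R] ++ map tD w ++ [U] ++ map tD w ++ [L] ++ map tH w.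

Fixpoint A (k : nat) : list dir :=
  match k with
  | 0 => []
  | S k' => if Nat.even k' then step_odd (A k') else step_even (A k')
  end.

(* h_n: the n-th letter of HC; A_{n+1} has length 4^{n+1}-1 > n and is a
   prefix of HC. *)
Definition h (n : nat) : dir := nth n (A (S n)) U.

Definition d (a : dir) : Z * Z :=
  match a with
  | R => (1, 0)%Z | L => (-1, 0)%Z | U => (0, 1)%Z | D => (0, -1)%Z
  end.

Fixpoint pos (n : nat) : Z * Z :=
  match n with
  | 0 => (0%Z, 0%Z)
  | S m => let '(x, y) := pos m in let '(dx, dy) := d (h m) in
           ((x + dx)%Z, (y + dy)%Z)
  end.

Definition dead : nat := 10.

Definition delta (q : nat) (l : nat * nat * nat) : nat :=
  match q, l with
  | 0, (0,0,0) => 0 | 0, (1,0,1) => 3 | 0, (1,1,0) => 1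
  | 0, (2,1,1) => 5 | 0, (3,0,1) => 4 | 0, (3,1,0) => 2
  | 1, (0,0,0) => 3 | 1, (1,1,0) => 6 | 1, (2,1,1) => 6 | 1, (3,0,1) => 7
  | 2, (0,1,1) => 4 | 2, (1,0,1) => 8 | 2, (2,0,0) => 8 | 2, (3,1,0) => 9
  | 3, (0,0,0) => 1 | 3, (1,0,1) => 9 | 3, (2,1,1) => 9 | 3, (3,1,0) => 8
  | 4, (0,1,1) => 2 | 4, (1,1,0) => 7 | 4, (2,0,0) => 7 | 4, (3,0,1) => 6
  | 5, (0,0,0) => 5 | 5, (1,0,1) => 9 | 5, (1,1,0) => 6
  | 5, (2,1,1) => 0 | 5, (3,0,1) => 7 | 5, (3,1,0) => 8
  | 6, (0,0,0) => 9 | 6, (1,1,0) => 1 | 6, (2,1,1) => 1 | 6, (3,0,1) => 4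
  | 7, (0,1,1) => 8 | 7, (1,1,0) => 4 | 7, (2,0,0) => 4 | 7, (3,0,1) => 1
  | 8, (0,1,1) => 7 | 8, (1,0,1) => 2 | 8, (2,0,0) => 2 | 8, (3,1,0) => 3
  | 9, (0,0,0) => 6 | 9, (1,0,1) => 3 | 9, (2,1,1) => 3 | 9, (3,1,0) => 2
  | _, _ => dead
  end.

Definition accepting (q : nat) : bool :=
  match q with 0 | 2 | 3 | 5 | 6 | 7 => true | _ => false end.

Definition run (w : list (nat * nat * nat)) : nat := fold_left delta w 0.

Definition HS_accepts (w : list (nat * nat * nat)) : bool := accepting (run w).

Definition digits (b t n : nat) : list nat :=
  map (fun i => (n / b ^ (t - 1 - i)) mod b) (seq 0 t).

Fixpoint zip3 (a b c : list nat) : list (nat * nat * nat) :=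
  match a, b, c with
  | x :: a', y :: b', z :: c' => (x, y, z) :: zip3 a' b' c'
  | _, _, _ => []
  end.

Definition input_word (t n x y : nat) : list (nat * nat * nat) :=
  zip3 (digits 4 t n) (digits 2 t x) (digits 2 t y).

(* Main.v *)
Require Import Defs.
From Stdlib Require Import Arith ZArith List Lia.
Import ListNotations.

Definition addv (p q : Z*Z) : Z*Z := ((fst p + fst q)%Z, (snd p + snd q)%Z).
Definition swv (p : Z*Z) : Z*Z := (snd p, fst p).
Definition negv (p : Z*Z) : Z*Z := ((- fst p)%Z, (- snd p)%Z).
Fixpoint vs (w : list dir) : Z*Z :=
  match w with [] => (0%Z,0%Z) | a :: w' => addv (d a) (vs w') end.

Ltac peq := apply injective_projections; unfold addv, swv, negv; cbn [fst snd d tD tH]; lia.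

Lemma vs_app l1 l2 : vs (l1 ++ l2) = addv (vs l1) (vs l2).
Proof. induction l1; cbn [vs app]. peq. rewrite IHl1. peq. Qed.
Lemma vs_tD w : vs (map tD w) = swv (vs w).
Proof. induction w as [|a w IH]; cbn [vs map]. reflexivity. rewrite IH.
  destruct a; peq. Qed.
Lemma vs_tH w : vs (map tH w) = negv (vs w).
Proof. induction w as [|a w IH]; cbn [vs map]. reflexivity. rewrite IH.
  destruct a; peq. Qed.

Lemma pos_S m : pos (S m) = addv (pos m) (d (h m)).
Proof. simpl. destruct (pos m), (d (h m)). reflexivity. Qed.

Lemma len_A k : length (A k) = 4 ^ k - 1.
Proof.
  induction k. reflexivity. cbn [A]. rewrite Nat.pow_succ_r'.
  assert (4 ^ k <> 0) by (apply Nat.pow_nonzero; lia).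
  destruct (Nat.even k); unfold step_odd, step_even; rewrite !length_app, !length_map; cbn [length]; rewrite IHk; lia.
Qed.

Lemma A_prefix k j : (k <= j)%nat -> exists w, A j = A k ++ w.
Proof.
  induction 1. exists []. now rewrite app_nil_r.
  destruct IHle as [w Hw]. cbn [A]. rewrite Hw.
  destruct (Nat.even m); unfold step_odd, step_even; eexists; rewrite <- app_assoc; reflexivity.
Qed.

Lemma pow4_gt n : (n < 4 ^ n)%nat.
Proof. apply Nat.pow_gt_lin_r. lia. Qed.

Lemma h_eq n j : (n < length (A j))%nat -> h n = nth n (A j) U.
Proof.
  intros Hn. unfold h.
  assert (Hn' : (n < length (A (S n)))%nat).
  { rewrite len_A. pose proof (pow4_gt (S n)). lia. }
  destruct (Nat.le_ge_cases j (S n)) as [Hj|Hj].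
  - destruct (A_prefix _ _ Hj) as [w Hw]. rewrite Hw. rewrite app_nth1; auto.
  - destruct (A_prefix _ _ Hj) as [w Hw]. rewrite Hw. rewrite app_nth1; auto.
Qed.

Lemma firstn_S_nth (w : list dir) n : (n < length w)%nat ->
  firstn (S n) w = firstn n w ++ [nth n w U].
Proof.
  revert n; induction w as [|a w IH]; intros n Hn; simpl in *. lia.
  destruct n. reflexivity. simpl. rewrite IH by lia. reflexivity.
Qed.

Lemma pos_eq n j : (n <= length (A j))%nat -> pos n = vs (firstn n (A j)).
Proof.
  induction n; intros Hn. reflexivity.
  rewrite pos_S, IHn by lia. rewrite (h_eq n j) by lia.
  rewrite firstn_S_nth by lia. rewrite vs_app. cbn [vs]. peq.
Qed.

Lemma firstn_app_le (l1 l2 : list dir) n : (n <= length l1)%nat -> firstn n (l1 ++ l2) = firstn n l1.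
Proof. intros. rewrite firstn_app. replace (n - length l1)%nat with 0%nat by lia. simpl. apply app_nil_r. Qed.
Lemma firstn_app_ge (l1 l2 : list dir) n : (length l1 <= n)%nat -> firstn n (l1 ++ l2) = l1 ++ firstn (n - length l1) l2.
Proof. intros. rewrite firstn_app. rewrite firstn_all2 by lia. reflexivity. Qed.

Lemma vs_piece w c1 c2 c3 a r : (a < 4)%nat -> (r <= length w)%nat ->
 vs (firstn (a*(length w + 1) + r) (w ++ [c1] ++ map tD w ++ [c2] ++ map tD w ++ [c3] ++ map tH w)) =
 match a with 0%nat => vs (firstn r w)
 | 1%nat => addv (vs w) (addv (d c1) (swv (vs (firstn r w))))
 | 2%nat => addv (vs w) (addv (d c1) (addv (swv (vs w)) (addv (d c2) (swv (vs (firstn r w))))))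
 | _ => addv (vs w) (addv (d c1) (addv (swv (vs w)) (addv (d c2) (addv (swv (vs w)) (addv (d c3) (negv (vs (firstn r w)))))))) end.
Proof.
  intros Ha Hr. cbn [app].
  destruct a as [|[|[|[|a]]]]; try lia.
  - rewrite firstn_app_le by lia. reflexivity.
  - rewrite firstn_app_ge by lia. replace (1 * (length w + 1) + r - length w)%nat with (S r) by lia.
    cbn [firstn]. rewrite firstn_app_le by (rewrite length_map; lia).
    rewrite firstn_map, vs_app. cbn [vs]. rewrite vs_tD. reflexivity.
  - rewrite firstn_app_ge by lia. replace (2 * (length w + 1) + r - length w)%nat with (S (length w + 1 + r)) by lia.
    cbn [firstn]. rewrite firstn_app_ge by (rewrite length_map; lia). rewrite length_map.
    replace (length w + 1 + r - length w)%nat with (S r) by lia. cbn [firstn].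
    rewrite firstn_app_le by (rewrite length_map; lia).
    rewrite firstn_map, vs_app. cbn [vs]. rewrite vs_app. cbn [vs]. rewrite !vs_tD. reflexivity.
  - rewrite firstn_app_ge by lia. replace (3 * (length w + 1) + r - length w)%nat with (S (length w + 1 + length w + 1 + r)) by lia.
    cbn [firstn]. rewrite firstn_app_ge by (rewrite length_map; lia). rewrite length_map.
    replace (length w + 1 + length w + 1 + r - length w)%nat with (S (length w + 1 + r)) by lia. cbn [firstn].
    rewrite firstn_app_ge by (rewrite length_map; lia). rewrite length_map.
    replace (length w + 1 + r - length w)%nat with (S r) by lia. cbn [firstn].
    rewrite firstn_map, vs_app. cbn [vs]. rewrite vs_app. cbn [vs]. rewrite vs_app. cbn [vs].
    rewrite !vs_tD, vs_tH. reflexivity.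
Qed.

Open Scope Z_scope.
Definition Sem (q:nat) (x y u v s : Z) (ev:bool) : Prop :=
 match q with
 | 0%nat => x=u /\ y=v
 | 5%nat => x=v /\ y=u
 | 1%nat => if ev then False else x=v /\ y=u
 | 3%nat => if ev then x=v /\ y=u else False
 | 6%nat => if ev then x=u /\ y=v else False
 | 9%nat => if ev then False else x=u /\ y=v
 | 2%nat => if ev then x=s-1-u /\ y=s-1-v else False
 | 7%nat => if ev then x=s-1-v /\ y=s-1-u else False
 | 4%nat => if ev then False else x=s-1-u /\ y=s-1-v
 | 8%nat => if ev then False else x=s-1-v /\ y=s-1-u
 | _ => False end.

Definition F (a:nat) (ev:bool) (s u v : Z) : Z*Z :=
 match a with
 | 0%nat => (u,v)
 | 1%nat => if ev then (v, s+u) else (s+v, u)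
 | 2%nat => (s+v, s+u)
 | 3%nat => if ev then (2*s-1-u, s-1-v) else (s-1-u, 2*s-1-v)
 | _ => (u,v) end.

Lemma case_lemma q a b c ev s u v x y :
  (a < 4)%nat -> (b < 2)%nat -> (c < 2)%nat -> 1 <= s -> 0 <= u < s -> 0 <= v < s ->
  0 <= x < s -> 0 <= y < s ->
  (Sem q (Z.of_nat b * s + x) (Z.of_nat c * s + y) (fst (F a ev s u v)) (snd (F a ev s u v)) (2*s) (negb ev)
   <-> Sem (delta q (a,b,c)) x y u v s ev).
Proof.
  intros Ha Hb Hc Hs Hu Hv Hx Hy.
  destruct a as [|[|[|[|a]]]]; try lia;
  destruct b as [|[|b]]; try lia;
  destruct c as [|[|c]]; try lia;
  destruct ev;
  remember (2*s) as s2;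
  destruct q as [|[|[|[|[|[|[|[|[|[|q]]]]]]]]]]; cbv [Sem delta F fst snd negb dead]; lia.
Qed.


Lemma even_S k : Nat.even (S k) = negb (Nat.even k).
Proof. rewrite Nat.even_succ, <- Nat.negb_even. reflexivity. Qed.

Lemma two_pow_S k : Z.of_nat (2 ^ S k) = 2 * Z.of_nat (2 ^ k).
Proof. rewrite Nat.pow_succ_r', Nat2Z.inj_mul. reflexivity. Qed.

Lemma vs_A k : vs (A k) = if Nat.even k then (0, Z.of_nat (2^k) - 1) else (Z.of_nat (2^k) - 1, 0).
Proof.
  induction k. reflexivity.
  cbn [A]. rewrite even_S, two_pow_S.
  destruct (Nat.even k) eqn:E; unfold step_odd, step_even; rewrite !vs_app, !vs_tD, vs_tH, IHk;
  cbn [vs negb]; peq.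
Qed.

Lemma pos_rec k a r : (a < 4)%nat -> (r < 4 ^ k)%nat ->
  pos (a * 4 ^ k + r) = F a (Nat.even k) (Z.of_nat (2^k)) (fst (pos r)) (snd (pos r)).
Proof.
  intros Ha Hr.
  pose proof (len_A k) as LA. pose proof (len_A (S k)) as LS.
  rewrite Nat.pow_succ_r' in LS.
  rewrite (pos_eq _ (S k)) by (rewrite LS; nia).
  rewrite (pos_eq r k) by lia.
  replace (4 ^ k)%nat with (length (A k) + 1)%nat by lia.
  pose proof (vs_A k) as VA.
  cbn [A]. destruct (Nat.even k); unfold step_odd, step_even; rewrite vs_piece by lia;
  rewrite VA; destruct a as [|[|[|[|a]]]]; try lia; unfold F; peq.
Qed.

Lemma pos_bound k : forall r, (r < 4 ^ k)%nat ->
  0 <= fst (pos r) < Z.of_nat (2^k) /\ 0 <= snd (pos r) < Z.of_nat (2^k).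
Proof.
  induction k; intros r Hr.
  - simpl in Hr. assert (r = 0%nat) by lia. subst. simpl. lia.
  - rewrite Nat.pow_succ_r' in Hr.
    assert (H4 : (4 ^ k <> 0)%nat) by (apply Nat.pow_nonzero; lia).
    pose proof (Nat.div_mod_eq r (4^k)) as E.
    assert (Ha : (r / 4 ^ k < 4)%nat) by (apply Nat.Div0.div_lt_upper_bound; lia).
    assert (Hr' : (r mod 4 ^ k < 4 ^ k)%nat) by (apply Nat.mod_upper_bound; lia).
    rewrite E, Nat.mul_comm, pos_rec by assumption.
    rewrite two_pow_S. destruct (IHk _ Hr') as [B1 B2].
    destruct (pos (r mod 4^k)) as [u v]; cbn [fst snd] in *.
    destruct (r / 4 ^ k)%nat as [|[|[|[|a]]]]; try lia;
    destruct (Nat.even k); unfold F; cbn [fst snd]; lia.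
Qed.

Lemma div_mod_pow b k j n : (b <> 0)%nat -> (j < k)%nat ->
  ((n / b ^ j) mod b = ((n mod b ^ k) / b ^ j) mod b)%nat.
Proof.
  intros Hb Hj.
  assert (Hbj : (b ^ j <> 0)%nat) by (apply Nat.pow_nonzero; lia).
  pose proof (Nat.div_mod_eq n (b^k)) as E.
  set (q := (n / b ^ k)%nat) in *. set (m := (n mod b ^ k)%nat) in *.
  assert (E2 : n = ((b ^ (k - 1 - j) * q) * b * b ^ j + m)%nat).
  { rewrite E at 1. f_equal.
    replace (b ^ k)%nat with (b ^ j * (b * b ^ (k - 1 - j)))%nat
      by (rewrite <- Nat.pow_succ_r', <- Nat.pow_add_r; f_equal; lia). ring. }
  clearbody q m. clear E. rename E2 into E.
  rewrite E at 1. rewrite Nat.div_add_l by assumption.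
  rewrite Nat.add_comm, Nat.Div0.mod_add. reflexivity.
Qed.

Lemma digits_S b k n : (b <> 0)%nat ->
  digits b (S k) n = ((n / b ^ k) mod b)%nat :: digits b k (n mod b ^ k).
Proof.
  intros Hb. unfold digits. cbn [seq map].
  replace (S k - 1 - 0)%nat with k by lia. f_equal.
  rewrite <- seq_shift, map_map. apply map_ext_in. intros i Hi.
  apply in_seq in Hi.
  replace (S k - 1 - S i)%nat with (k - 1 - i)%nat by lia.
  apply div_mod_pow; lia.
Qed.

Lemma main k : forall q m x y, (m < 4^k)%nat -> (x < 2^k)%nat -> (y < 2^k)%nat ->
 (accepting (fold_left delta (input_word k m x y) q) = true <->
  Sem q (Z.of_nat x) (Z.of_nat y) (fst (pos m)) (snd (pos m)) (Z.of_nat (2^k)) (Nat.even k)).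
Proof.
  induction k; intros q m x y Hm Hx Hy.
  - simpl in Hm, Hx, Hy. assert (m = 0%nat) by lia. assert (x = 0%nat) by lia.
    assert (y = 0%nat) by lia. subst. unfold input_word, digits. simpl.
    destruct q as [|[|[|[|[|[|[|[|[|[|q]]]]]]]]]]; simpl; intuition (try discriminate; lia).
  - assert (H4 : (4 ^ k <> 0)%nat) by (apply Nat.pow_nonzero; lia).
    assert (H2 : (2 ^ k <> 0)%nat) by (apply Nat.pow_nonzero; lia).
    rewrite Nat.pow_succ_r' in Hm, Hx, Hy.
    unfold input_word. rewrite !digits_S by lia. cbn [zip3 fold_left].
    fold (input_word k (m mod 4 ^ k) (x mod 2 ^ k) (y mod 2 ^ k)).
    assert (Ha : (m / 4 ^ k < 4)%nat) by (apply Nat.Div0.div_lt_upper_bound; lia).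
    assert (Hb : (x / 2 ^ k < 2)%nat) by (apply Nat.Div0.div_lt_upper_bound; lia).
    assert (Hc : (y / 2 ^ k < 2)%nat) by (apply Nat.Div0.div_lt_upper_bound; lia).
    rewrite (Nat.mod_small (m / 4 ^ k)), (Nat.mod_small (x / 2 ^ k)), (Nat.mod_small (y / 2 ^ k)) by assumption.
    assert (Hr : (m mod 4 ^ k < 4 ^ k)%nat) by (apply Nat.mod_upper_bound; lia).
    assert (Hx' : (x mod 2 ^ k < 2 ^ k)%nat) by (apply Nat.mod_upper_bound; lia).
    assert (Hy' : (y mod 2 ^ k < 2 ^ k)%nat) by (apply Nat.mod_upper_bound; lia).
    rewrite IHk by assumption.
    pose proof (Nat.div_mod_eq m (4^k)) as Em.
    pose proof (Nat.div_mod_eq x (2^k)) as Ex.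
    pose proof (Nat.div_mod_eq y (2^k)) as Ey.
    pose proof (pos_bound k _ Hr) as PB.
    set (a := (m / 4 ^ k)%nat) in *. set (r := (m mod 4 ^ k)%nat) in *.
    set (b := (x / 2 ^ k)%nat) in *. set (x' := (x mod 2 ^ k)%nat) in *.
    set (c := (y / 2 ^ k)%nat) in *. set (y' := (y mod 2 ^ k)%nat) in *.
    clearbody a r b x' c y'. subst m x y.
    rewrite (Nat.mul_comm (4 ^ k) a), pos_rec by assumption.
    rewrite even_S, two_pow_S.
    rewrite !Nat2Z.inj_add, !Nat2Z.inj_mul.
    rewrite (Z.mul_comm (Z.of_nat (2 ^ k)) (Z.of_nat b)).
    rewrite (Z.mul_comm (Z.of_nat (2 ^ k)) (Z.of_nat c)).
    symmetry.
    apply case_lemma; lia.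
Qed.

Close Scope Z_scope.

Theorem mainTheorem3 (n x y t : nat) :
  n < 4 ^ t -> x < 2 ^ t -> y < 2 ^ t ->
  (HS_accepts (input_word t n x y) = true <->
   pos n = (Z.of_nat x, Z.of_nat y)).
Proof.
  intros Hn Hx Hy. unfold HS_accepts, run. rewrite main by assumption.
  cbn [Sem]. destruct (pos n) as [u v]. cbn [fst snd].
  split. intros [-> ->]; reflexivity. intros E; inversion E; auto.
Qed.
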